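(* Consider the system for scalar functions $p(z),q(z)$ \[ p'''= 3pp'+3q'+zp'+2p,\qquad q'''= 12pq'+6p'q+3p''+4zq'-2q. \] (i) This system admits the isomonodromic Lax representation ${\cal A}'={\cal B}_\zeta+[{\cal B},{\cal A}]$ (identically in the spectral parameter $\zeta$) with the $5\times5$ matrices \[ {\cal A}={\cal A}_0+\frac{1}{\zeta}{\cal A}_{-1},\qquad {\cal A}_{-1}= \begin{pmatrix} 0 & 0 & p+z & 0 & -1 \\ 0 & 0 & 0 & 0 & 0 \\ -p''+2p(p+z)+2q & 0 & p' & -2p & 0 \\ p'(p+z)-q' & 0 & 2q & -p' & 0 \\ p''(p+z)+p'+4pq-q'' & 0 & q' & 2q-p'' & 0 \end{pmatrix}, \] \[ {\cal A}_0= \begin{pmatrix} 0 & p+z-\zeta^2 & -\zeta & 0 & 0 \\ p+z-\zeta^2 & 0 & 0 & -1 & 0 \\ -2p\zeta & p' & 0 & 0 & 0 \\ -p'\zeta & 2q & 0 & 0 & 0 \\ (2q-p'')\zeta & q' & 0 & 0 & 0 \end{pmatrix},\qquad {\cal B}= \begin{pmatrix} 0 & \zeta & 1 & 0 & 0 \\ \zeta & 0 & 0 & 0 & 0 \\ 2p & 0 & 0 & 1 & 0 \\ p' & 0 & 0 & 0 & 1 \\ p''-2q & 0 & 1 & 3p+z & 0 \end{pmatrix}. \] (ii) The following quantities are first integrals of the system: \[ H_1=q''-6pq+2zq-2(p+z)p''+(p')^2-p'+2p(p+z)^2, \] \[ H_2= 2q(p''-2q)^2-2q'(p'p''-2p'q-pq')+((p')^2-4pq)(q''-p'-6pq-2zq).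 \]
   Context: Primes denote derivatives with respect to $z$; $\zeta$ is a spectral parameter independent of $z$. ''Admits the Lax representation'' means that the matrix equation ${\cal A}'={\cal B}_\zeta+[{\cal B},{\cal A}]$ holds by virtue of the system. *)

(* Defs.v *)
From Stdlib Require Import Reals.
From Coquelicot Require Import Coquelicot.
Open Scope R_scope.

(* 5x5 real matrices, indexed by 0..4 (row, column). *)
Definition mat := nat -> nat -> R.

Definition matmul (M N : mat) : mat :=
  fun i j => sum_f_R0 (fun k => M i k * N k j) 4.

Definition comm (M N : mat) : mat :=
  fun i j => matmul M N i j - matmul N M i j.

Section LaxMatrices.
Variables p q : R -> R.

Definition d1 (f : R -> R) (z : R) := Derive_n f 1 z.
Definition d2 (f : R -> R) (z : R) := Derive_n f 2 z.

Definition Am1 (z : R) : mat := fun i j =>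
  let P := p z in let P1 := d1 p z in let P2 := d2 p z in
  let Q := q z in let Q1 := d1 q z in let Q2 := d2 q z in
  match i, j with
  | 0%nat, 2%nat => P + z
  | 0%nat, 4%nat => -1
  | 2%nat, 0%nat => - P2 + 2 * P * (P + z) + 2 * Q
  | 2%nat, 2%nat => P1
  | 2%nat, 3%nat => -2 * P
  | 3%nat, 0%nat => P1 * (P + z) - Q1
  | 3%nat, 2%nat => 2 * Q
  | 3%nat, 3%nat => - P1
  | 4%nat, 0%nat => P2 * (P + z) + P1 + 4 * P * Q - Q2
  | 4%nat, 2%nat => Q1
  | 4%nat, 3%nat => 2 * Q - P2
  | _, _ => 0
  end.

Definition A0 (z zeta : R) : mat := fun i j =>
  let P := p z in let P1 := d1 p z in let P2 := d2 p z in
  let Q := q z in let Q1 := d1 q z in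
  match i, j with
  | 0%nat, 1%nat => P + z - zeta ^ 2
  | 0%nat, 2%nat => - zeta
  | 1%nat, 0%nat => P + z - zeta ^ 2
  | 1%nat, 3%nat => -1
  | 2%nat, 0%nat => -2 * P * zeta
  | 2%nat, 1%nat => P1
  | 3%nat, 0%nat => - P1 * zeta
  | 3%nat, 1%nat => 2 * Q
  | 4%nat, 0%nat => (2 * Q - P2) * zeta
  | 4%nat, 1%nat => Q1
  | _, _ => 0
  end.

Definition LaxA (z zeta : R) : mat := fun i j =>
  A0 z zeta i j + / zeta * Am1 z i j.

Definition LaxB (z zeta : R) : mat := fun i j =>
  let P := p z in let P1 := d1 p z in let P2 := d2 p z in
  let Q := q z in
  match i, j with
  | 0%nat, 1%nat => zeta
  | 0%nat, 2%nat => 1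
  | 1%nat, 0%nat => zeta
  | 2%nat, 0%nat => 2 * P
  | 2%nat, 3%nat => 1
  | 3%nat, 0%nat => P1
  | 3%nat, 4%nat => 1
  | 4%nat, 0%nat => P2 - 2 * Q
  | 4%nat, 2%nat => 1
  | 4%nat, 3%nat => 3 * P + z
  | _, _ => 0
  end.

Definition H1 (z : R) : R :=
  let P := p z in let P1 := d1 p z in let P2 := d2 p z in
  let Q := q z in let Q2 := d2 q z in
  Q2 - 6 * P * Q + 2 * z * Q - 2 * (P + z) * P2 + P1 ^ 2 - P1
  + 2 * P * (P + z) ^ 2.

Definition H2 (z : R) : R :=
  let P := p z in let P1 := d1 p z in let P2 := d2 p z in
  let Q := q z in let Q1 := d1 q z in let Q2 := d2 q z in
  2 * Q * (P2 - 2 * Q) ^ 2 - 2 * Q1 * (P1 * P2 - 2 * P1 * Q - P * Q1)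
  + (P1 ^ 2 - 4 * P * Q) * (Q2 - P1 - 6 * P * Q - 2 * z * Q).

End LaxMatrices.

Definition thrice_diff (f : R -> R) : Prop :=
  forall (n : nat) (z : R), (n <= 3)%nat -> ex_derive_n f n z.

Definition solves_system (p q : R -> R) : Prop :=
  forall z : R,
    Derive_n p 3 z = 3 * p z * Derive_n p 1 z + 3 * Derive_n q 1 z
                     + z * Derive_n p 1 z + 2 * p z /\
    Derive_n q 3 z = 12 * p z * Derive_n q 1 z + 6 * Derive_n p 1 z * q z
                     + 3 * Derive_n p 2 z + 4 * z * Derive_n q 1 z - 2 * q z.

(* Main.v *)
Require Import Defs.
From Stdlib Require Import Reals Lra Lia.
From Coquelicot Require Import Coquelicot.
Open Scope R_scope.

Ltac sides Hp Hq :=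
  repeat split;
  first [ exact (Hp 1%nat _ ltac:(lia)) | exact (Hp 2%nat _ ltac:(lia)) | exact (Hp 3%nat _ ltac:(lia))
        | exact (Hq 1%nat _ ltac:(lia)) | exact (Hq 2%nat _ ltac:(lia)) | exact (Hq 3%nat _ ltac:(lia)) ].

Ltac fold_dn f :=
  repeat match goal with
  | |- context [Derive (fun x => Derive (fun x0 => Derive (fun x1 => f x1) x0) x) ?t] =>
      change (Derive (fun x => Derive (fun x0 => Derive (fun x1 => f x1) x0) x) t) with (Derive_n f 3 t)
  | |- context [Derive (fun x => Derive (fun x0 => f x0) x) ?t] =>
      change (Derive (fun x => Derive (fun x0 => f x0) x) t) with (Derive_n f 2 t)
  | |- context [Derive (fun x => f x) ?t] =>
      change (Derive (fun x => f x) t) with (Derive_n f 1 t)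
  end; unfold Defs.d1, Defs.d2;
  repeat match goal with
  | |- context [Derive (fun x => Derive_n f ?n x) ?t] =>
      change (Derive (fun x => Derive_n f n x) t) with (Derive_n f (S n) t)
  end.

Lemma H1_der p q : thrice_diff p -> thrice_diff q -> solves_system p q -> forall t, is_derive (H1 p q) t 0.
Proof.
intros Hp Hq Hs t.
unfold H1, d1, d2.
auto_derive; [sides Hp Hq|].
fold_dn p. fold_dn q.
destruct (Hs t) as [E1 E2]. rewrite E1, E2. ring.
Qed.

Lemma H2_der p q : thrice_diff p -> thrice_diff q -> solves_system p q -> forall t, is_derive (H2 p q) t 0.
Proof.
intros Hp Hq Hs t.
unfold H2, Defs.d1, Defs.d2.
auto_derive; [sides Hp Hq|].
fold_dn p. fold_dn q.
destruct (Hs t) as [E1 E2]. rewrite E1, E2. ring.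
Qed.

Lemma const_of_der (f : R -> R) : (forall t, is_derive f t 0) -> forall a b, f a = f b.
Proof.
intros H a b. destruct (Rtotal_order a b) as [h|[h|h]].
- apply eq_is_derive; auto.
- subst; auto.
- symmetry; apply eq_is_derive; auto.
Qed.

Lemma lax p q : thrice_diff p -> thrice_diff q -> solves_system p q ->
  (forall (z zeta : R), zeta <> 0 ->
     forall i j : nat, (i < 5)%nat -> (j < 5)%nat ->
       Derive (fun w => LaxA p q w zeta i j) z =
       Derive (fun y => LaxB p q z y i j) zeta
       + comm (LaxB p q z zeta) (LaxA p q z zeta) i j).
Proof.
intros Hp Hq Hs z zeta Hz i j Hi Hj.
destruct i as [|[|[|[|[|i]]]]]; try lia;
destruct j as [|[|[|[|[|j]]]]]; try lia;
cbv beta iota zeta delta [LaxA A0 Am1 LaxB comm matmul sum_f_R0];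
(match goal with |- Derive ?f ?x = _ => erewrite (is_derive_unique f x) end;
  [| auto_derive; [sides Hp Hq| reflexivity] || (auto_derive; reflexivity)]);
(match goal with |- _ = Derive ?f ?x + _ => erewrite (is_derive_unique f x) end;
  [| auto_derive; reflexivity]);
fold_dn p; fold_dn q; unfold Defs.d1, Defs.d2;
destruct (Hs z) as [E1 E2]; rewrite ?E1, ?E2; field; auto.
Qed.

Theorem proposition4 (p q : R -> R) :
  thrice_diff p -> thrice_diff q -> solves_system p q ->
  (* (i) Lax representation A' = B_zeta + [B, A], identically in zeta <> 0 *)
  (forall (z zeta : R), zeta <> 0 ->
     forall i j : nat, (i < 5)%nat -> (j < 5)%nat ->
       Derive (fun w => LaxA p q w zeta i j) z =
       Derive (fun y => LaxB p q z y i j) zeta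
       + comm (LaxB p q z zeta) (LaxA p q z zeta) i j)
  /\
  (* (ii) H1 and H2 are first integrals (constant along solutions) *)
  (forall z1 z2 : R, H1 p q z1 = H1 p q z2) /\
  (forall z1 z2 : R, H2 p q z1 = H2 p q z2).
Proof.
intros Hp Hq Hs. split; [|split].
- apply lax; auto.
- apply const_of_der, H1_der; auto.
- apply const_of_der, H2_der; auto.
Qed.
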